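(* Let $n$ be prime, let $c: [n] \to [n]$ be given by $c(i) = i+1$ for $1 \le i < n$ and $c(n) = 1$, and let $w = w(1)\cdots w(n) \in \mathbb{P}^n$ be a nonconstant word. Then for $\pi \in \mathfrak{S}_n$, $\mathrm{cstd}(w) = \pi$ if and only if $w \in A(\pi, S)$ where $S = \mathrm{Des}(\pi c \pi^{-1})$.
   Context: $\mathbb{P} = \{1,2,\ldots\}$ and $\mathfrak{S}_n$ is the set of permutations of $[n]$. A word $w \in \mathbb{P}^n$ is identified with the coloring $i \mapsto w(i)$ of $[n]$. For $1 \le i \le n$ the rotation $r_i(w)$ is the word $w(i)w(i+1)\cdots w(n)w(1)\cdots w(i-1)$. When $n$ is prime and $w$ is nonconstant, the $n$ rotations are pairwise distinct, and the cyclic standardization $\mathrm{cstd}(w)$ is the unique $\pi \in \mathfrak{S}_n$ such that $r_x(w) <_{\mathrm{lex}} r_y(w)$ whenever $\pi(x) < \pi(y)$ (i.e. $\pi(i) = j$ when $r_i(w)$ is the $j$th smallest rotation in lexicographic order). For $\pi \in \mathfrak{S}_n$ and $S \subseteq [n-1]$, $A(\pi,S)$ is the set of words $w$ with $w(\pi^{-1}(1)) \le \cdots \le w(\pi^{-1}(n))$ and $w(\pi^{-1}(i)) < w(\pi^{-1}(i+1))$ for $i \in S$. $\mathrm{Des}(\sigma) = \{i \in [n-1]: \sigma(i) > \sigma(i+1)\}$. *)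

(* Defs.v *)
From mathcomp Require Import ssreflect ssrfun ssrbool eqtype ssrnat seq choice fintype finfun bigop prime finset fingroup perm.

Set Implicit Arguments.
Unset Strict Implicit.
Unset Printing Implicit Defensive.

(* Conventions: the paper's [n] = {1,...,n} is represented by 'I_n = {0,...,n-1},
   via the shift k |-> k-1.  A word w in P^n is a function w : 'I_n -> nat with
   all values positive. *)

Fixpoint lexlt (s t : seq nat) : bool :=
  match s, t with
  | [::], [::] => false
  | [::], _ :: _ => true
  | _ :: _, [::] => false
  | x :: s', y :: t' => (x < y) || ((x == y) && lexlt s' t')
  end.

Definition word_seq (n : nat) (w : 'I_n -> nat) : seq nat :=
  [seq w j | j <- enum 'I_n].

(* r_i(w) = w(i) ... w(n) w(1) ... w(i-1); index i : 'I_n is the paper's i+1 *)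
Definition rotation (n : nat) (w : 'I_n -> nat) (i : 'I_n) : seq nat :=
  rot i (word_seq w).

Definition is_cstd (n : nat) (w : 'I_n -> nat) (pi : 'S_n) : bool :=
  [forall x : 'I_n, forall y : 'I_n,
     (pi x < pi y) ==> lexlt (rotation w x) (rotation w y)].

(* cstd(w): the unique permutation with that property (1 if none exists,
   which cannot happen for n prime and w nonconstant) *)
Definition cstd (n : nat) (w : 'I_n -> nat) : 'S_n :=
  odflt 1%g [pick pi : 'S_n | is_cstd w pi].

Definition cyc (n : nat) : 'S_n := perm (@ordS_inj n).

(* Des(sigma) = {i in [n-1] : sigma(i) > sigma(i+1)}, as a predicate on
   (0-based) positions i with i+1 < n *)
Definition Des (n : nat) (sigma : 'S_n) (i : 'I_n) : Prop :=
  exists j : 'I_n, val j = (val i).+1 /\ sigma j < sigma i.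

Definition inA (n : nat) (pi : 'S_n) (S : 'I_n -> Prop) (w : 'I_n -> nat) : Prop :=
  forall i j : 'I_n, val j = (val i).+1 ->
    w ((pi^-1)%g i) <= w ((pi^-1)%g j) /\
    (S i -> w ((pi^-1)%g i) < w ((pi^-1)%g j)).

(* Main.v *)
Require Import Defs.
From mathcomp Require Import ssreflect ssrfun ssrbool eqtype ssrnat seq choice fintype finfun bigop prime finset fingroup perm div.
Set Implicit Arguments. Unset Strict Implicit. Unset Printing Implicit Defensive.

Lemma lexlt_irr s : lexlt s s = false.
Proof. by elim: s => //= a s ->; rewrite ltnn eqxx. Qed.

Lemma lexlt_trans s t u : lexlt s t -> lexlt t u -> lexlt s u.
Proof.
elim: s t u => [|a s IH] [|b t] [|c u] //=.
case/orP=> [ab|/andP[/eqP-> st]]; case/orP=> [bc|/andP[/eqP<- tu]].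
- by rewrite (ltn_trans ab bc).
- by rewrite ab.
- by rewrite bc.
- by rewrite eqxx (IH _ _ st tu) orbT.
Qed.

Lemma lexlt_asym s t : lexlt s t -> lexlt t s = false.
Proof. by move=> st; apply/negP=> ts; have := lexlt_trans st ts; rewrite lexlt_irr. Qed.

Lemma lexlt_total s t : size s = size t -> s != t -> lexlt s t || lexlt t s.
Proof.
elim: s t => [|a s IH] [|b t] //= [] /IH {}IH.
rewrite eqseq_cons negb_and.
case: (ltngtP a b) => //= [_|_|->]; rewrite ?orbT //.
Qed.

Lemma lexlt_rcons s t a b : size s = size t -> lexlt s t -> lexlt (rcons s a) (rcons t b).
Proof.
elim: s t => [|x s IH] [|y t] //= [] /IH {}IH.
by case/orP=> [->//|/andP[-> /IH->]]; rewrite orbT.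
Qed.

Definition lexle s t := lexlt s t || (s == t).

Lemma lexle_cons a b s t : a <= b -> (a = b -> lexle s t) -> lexle (a :: s) (b :: t).
Proof.
rewrite leq_eqVlt => /orP[/eqP ab|ab] H; last by rewrite /lexle /= ab.
move: (H ab); rewrite /lexle /= ab eqxx ltnn eqseq_cons eqxx /=.
by case/orP=> ->; rewrite ?orbT.
Qed.

Section Rot.
Variables (n' : nat) (w : 'I_n'.+1 -> nat).
Local Notation n := n'.+1.
Local Notation r := (rotation w).

Lemma size_word : size (word_seq w) = n.
Proof. by rewrite /word_seq size_map size_enum_ord. Qed.

Lemma size_r x : size (r x) = n.
Proof. by rewrite /rotation size_rot size_word. Qed.

Lemma r_head x : r x = w x :: behead (r x).
Proof.
rewrite /rotation /rot (drop_nth (w x)) ?size_word ?ltn_ord //=.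
by rewrite /word_seq (nth_map x) ?size_enum_ord ?ltn_ord // nth_ord_enum.
Qed.

Lemma r_S x : r (ordS x) = rcons (behead (r x)) (w x).
Proof.
have -> : r (ordS x) = rot 1 (r x).
  rewrite /rotation -rotD /=; last by rewrite size_word add1n ltn_ord.
  rewrite add1n; case: (ltngtP x.+1 n) => [lt|gt|e].
  - by rewrite modn_small.
  - by move: gt; rewrite ltnS leqNgt ltn_ord.
  - by rewrite e modnn rot0; have := rot_size (word_seq w); rewrite size_word.
by rewrite {1}r_head rot1_cons.
Qed.

Lemma take_rS x m : m < n -> take m.+1 (r x) = w x :: take m (r (ordS x)).
Proof.
move=> mn; rewrite {1}r_head /= r_S -cats1 takel_cat //.
by rewrite size_behead size_r.
Qed.

Lemma iter_val t x : val (iter t (@ordS n) x) = (x + t) %% n.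
Proof.
elim: t => [|t IH] /=; first by rewrite addn0 modn_small.
by rewrite IH -addn1 modnDml addn1 addnS.
Qed.

Lemma r_iter x y t : r x = r y -> r (iter t (@ordS n) x) = r (iter t (@ordS n) y).
Proof.
move=> e; elim: t => [|t IH] //=.
have wh : w (iter t (@ordS n) x) = w (iter t (@ordS n) y).
  by move: IH; rewrite (r_head (iter t _ x)) (r_head (iter t _ y)) => -[].
by rewrite !r_S IH wh.
Qed.

Lemma r_inj : prime n -> (exists i j, w i != w j) -> injective r.
Proof.
move=> pn [i0 [j0 neq]] x y exy; apply/eqP; apply/negPn/negP => nxy.
have wit t : w (iter t (@ordS n) x) = w (iter t (@ordS n) y).
  by have := r_iter t exy; rewrite (r_head (iter _ _ x)) (r_head (iter _ _ y)) => -[].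
pose d := (y + (n - x)) %% n.
have dx : iter d (@ordS n) x = y.
  apply/val_inj; rewrite iter_val /d modnDmr addnCA subnKC ?(ltnW (ltn_ord x)) //.
  by rewrite modnDr modn_small.
have d0 : 0 < d.
  by rewrite lt0n; apply/negP => /eqP d0; move: dx; rewrite d0 /= => /eqP; rewrite (negbTE nxy).
have dn : d < n by rewrite /d ltn_mod.
have wd z : w (iter d (@ordS n) z) = w z.
  pose t := (z + (n - x)) %% n.
  have tz : iter t (@ordS n) x = z.
    apply/val_inj; rewrite iter_val /t modnDmr addnCA subnKC ?(ltnW (ltn_ord x)) //.
    by rewrite modnDr modn_small.
  rewrite -tz -iterD addnC iterD dx.
  by rewrite -wit.
have wmd m z : w (iter (m * d) (@ordS n) z) = w z.
  by elim: m => //= m IH; rewrite mulSn iterD wd IH.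
have cop : gcdn d n = 1.
  apply/eqP; rewrite gcdnC -/(coprime n d) prime_coprime //.
  by rewrite gtnNdvd.
have [a _ ha] := Bezoutr d (ltn0Sn n').
rewrite cop in ha.
suff wc z z' : w z = w z' by move: neq; rewrite (wc i0 j0) eqxx.
pose K := z + (n - z').
have -> : z' = iter (a * K * d) (@ordS n) z.
  apply/val_inj; rewrite iter_val; apply/eqP.
  rewrite -[X in X == _](modn_small (ltn_ord z')) eq_sym -(eqn_modDr K) -addnA.
  have -> : a * K * d + K = (1 + a * d) * K.
    by rewrite mulnDl mul1n addnC mulnAC.
  rewrite -modnDmr (eqP (dvdn_mulr K ha)) addn0 /K addnCA subnKC ?(ltnW (ltn_ord z')) //.
  by rewrite modnDr.
by rewrite wmd.
Qed.

End Rot.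

Section Cs.
Variables (n' : nat) (w : 'I_n'.+1 -> nat).
Local Notation n := n'.+1.
Local Notation r := (rotation w).

Lemma cstd_iff (p : 'S_n) : is_cstd w p -> forall x y, lexlt (r x) (r y) = (p x < p y).
Proof.
move=> /forallP H x y.
have H' u v : p u < p v -> lexlt (r u) (r v) by move=> h; have := forallP (H u) v; rewrite h.
case: (ltngtP (p x) (p y)) => [h|h|h]; first by rewrite H'.
  by rewrite lexlt_asym // H'.
have -> : x = y by apply: (@perm_inj _ p); apply: val_inj.
by rewrite lexlt_irr.
Qed.

Lemma card_lt (a : nat) : a <= n -> #|[set k : 'I_n | k < a]| = a.
Proof.
move=> Ha.
have -> : [set k : 'I_n | k < a] = [set widen_ord Ha j | j : 'I_a].
  apply/setP => k; rewrite inE; apply/idP/imsetP.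
    by move=> ka; exists (Ordinal ka) => //; apply: val_inj.
  by case=> j _ ->; rewrite /= ltn_ord.
by rewrite card_imset ?card_ord //; move=> u v /(congr1 val) /= e; apply: val_inj.
Qed.

Lemma rank_p (p : 'S_n) x : is_cstd w p -> val (p x) = #|[set y | lexlt (r y) (r x)]|.
Proof.
move=> H.
have -> : [set y | lexlt (r y) (r x)] = p @^-1: [set k : 'I_n | k < p x].
  by apply/setP => y; rewrite !inE (cstd_iff H).
by rewrite card_preimset ?card_lt ?(ltnW (ltn_ord _)) //; apply: perm_inj.
Qed.

Lemma cstd_uniq (p q : 'S_n) : is_cstd w p -> is_cstd w q -> p = q.
Proof. by move=> Hp Hq; apply/permP => x; apply: val_inj; rewrite !rank_p. Qed.

Definition rk x := #|[set y | lexlt (r y) (r x)]|.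

Lemma rk_lt x y : lexlt (r y) (r x) -> rk y < rk x.
Proof.
move=> yx; apply: proper_card; apply/properP; split.
  by apply/subsetP => z; rewrite !inE => zy; apply: lexlt_trans zy yx.
by exists y; rewrite !inE ?yx ?lexlt_irr.
Qed.

Lemma rk_ltn x : rk x < n.
Proof.
apply: (@leq_trans #|[set: ('I_n)]|); last by rewrite cardsT card_ord. apply: proper_card; apply/properP; split.
  by apply/subsetP => z; rewrite !inE.
by exists x; rewrite !inE ?lexlt_irr.
Qed.

Hypothesis (pn : prime n) (nc : exists i j, w i != w j).

Lemma r_neq x y : x != y -> r x != r y.
Proof. by apply: contraNN => /eqP /(r_inj pn nc) ->. Qed.

Lemma rk_inj : injective (fun x => Ordinal (rk_ltn x)).
Proof.
move=> x y [] e; apply/eqP; apply/negPn/negP => /r_neq nxy.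
case/orP: (lexlt_total (etrans (size_r w x) (esym (size_r w y))) nxy) => /rk_lt;
  by rewrite e ltnn.
Qed.

Lemma cstd_exists : exists p, is_cstd w p.
Proof.
exists (perm rk_inj); apply/forallP => x; apply/forallP => y; apply/implyP.
rewrite !permE /= => lt.
have nxy : x != y by apply: contraTneq lt => ->; rewrite ltnn.
case/orP: (lexlt_total (etrans (size_r w x) (esym (size_r w y))) (r_neq nxy)) => // /rk_lt.
by rewrite ltnNge (ltnW lt).
Qed.

Lemma cstdE p : cstd w = p <-> is_cstd w p.
Proof.
rewrite /cstd; case: pickP => [q Hq|H].
  by split=> [<-//|Hp]; apply: cstd_uniq.
by have [q Hq] := cstd_exists; move: (H q); rewrite Hq.
Qed.

End Cs.

Section Dir.
Variables (n' : nat) (w : 'I_n'.+1 -> nat) (pi : 'S_n'.+1).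
Local Notation n := n'.+1.
Local Notation r := (rotation w).

Lemma sigmaE k : (pi^-1 * cyc n * pi)%g k = pi (ordS (pi^-1 k))%g.
Proof. by rewrite !permM /cyc permE. Qed.

Lemma dir1 : is_cstd w pi -> inA pi (Des (pi^-1 * cyc n * pi)%g) w.
Proof.
move=> H i j ij.
set a := (pi^-1)%g i; set b := (pi^-1)%g j.
have ab : lexlt (r a) (r b) by rewrite (cstd_iff H) /a /b !permKV ij.
move: ab; rewrite (r_head w a) (r_head w b) /= => ab.
split; first by case/orP: ab => [/ltnW//|/andP[/eqP-> _]].
case=> j' [j'i des].
have j'j : j' = j by apply: val_inj; rewrite j'i ij.
move: des; rewrite j'j !sigmaE -/a -/b -(cstd_iff H) => des.
case/orP: ab => [//|/andP[/eqP e tl]].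
have := @lexlt_rcons _ _ (w a) (w b) (etrans (size_behead _) (etrans (congr1 predn (size_r w a)) (esym (etrans (size_behead _) (congr1 predn (size_r w b)))))) tl.
by rewrite -!r_S lexlt_asym.
Qed.


Lemma dir2 : prime n -> (exists i j, w i != w j) ->
  inA pi (Des (pi^-1 * cyc n * pi)%g) w -> is_cstd w pi.
Proof.
move=> pn nc H.
pose g k := w ((pi^-1)%g (inord k)).
pose s k := val (pi (ordS ((pi^-1)%g (inord k)))).
have hstep k : k < n' -> g k <= g k.+1 /\ (s k.+1 < s k -> g k < g k.+1).
  move=> kn.
  have k1 : k.+1 < n by [].
  have k0 : k < n by rewrite ltnS ltnW.
  have e : nat_of_ord (@inord n' k.+1) = (nat_of_ord (@inord n' k)).+1 by rewrite !inordK.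
  have [h1 h2] := H (inord k) (inord k.+1) e.
  split=> // d; apply: h2; exists (inord k.+1); split=> //.
  by rewrite !sigmaE.
have chain1 k l : k <= l <= n' -> g k <= g l.
  elim: l => [|l IH]; first by rewrite leqn0 => /andP[/eqP-> _].
  rewrite leq_eqVlt => /andP[/orP[/eqP->//|kl] ln].
  apply: leq_trans (proj1 (hstep l ln)); apply: IH; rewrite -ltnS kl /=.
  exact: ltnW.
have chain2 k l : k <= l <= n' -> g k = g l -> s k <= s l.
  elim: l => [|l IH]; first by rewrite leqn0 => /andP[/eqP-> _].
  rewrite leq_eqVlt => /andP[/orP[/eqP->//|kl] ln] e.
  have kl' : k <= l <= n' by rewrite -ltnS kl ltnW.
  have [h1 h2] := hstep l ln.
  have gkl : g k <= g l by apply: chain1.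
  have glk : g l = g k by apply/eqP; rewrite eqn_leq gkl e h1.
  apply: leq_trans (IH kl' (esym glk)) _.
  by rewrite leqNgt; apply/negP => /h2; rewrite glk e ltnn.
have back k : (pi^-1)%g (inord (s k)) = ordS ((pi^-1)%g (inord k)).
  by rewrite /s inord_val permK.
have P m : m <= n -> forall k l, k <= l <= n' ->
    lexle (take m (r ((pi^-1)%g (inord k)))) (take m (r ((pi^-1)%g (inord l)))).
  elim: m => [|m IH] mn k l kl; first by rewrite !take0 /lexle eqxx orbT.
  rewrite !take_rS //; apply: lexle_cons; first exact: chain1.
  move=> e; rewrite -!back; apply: IH; first exact: ltnW.
  by rewrite chain2 //= -ltnS ltn_ord.
apply/forallP => x; apply/forallP => y; apply/implyP => lt.
have := P n (leqnn n) (pi x) (pi y).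
rewrite !take_oversize ?size_r // !inord_val !permK ltnW ?lt //= -ltnS ltn_ord => /(_ isT).
case/orP => // /eqP /(r_inj pn nc) exy.
by move: lt; rewrite exy ltnn.
Qed.

End Dir.

Theorem lemma2p2 (n : nat) (w : 'I_n -> nat) (pi : 'S_n) :
  prime n ->
  (forall i, 0 < w i) ->
  (exists i j, w i != w j) ->
  cstd w = pi <->
  inA pi (Des (pi^-1 * cyc n * pi)%g) w.
Proof.
case: n w pi => [|n'] w pi pn _ nc; first by [].
apply: (iff_trans (cstdE pn nc pi)); split; [exact: dir1 | exact: dir2].
Qed.
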